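(* Fix $2\le d\le7$, let $(a,b,c)$ be given by: $d=2$: $(0.5,0.7,0.27)$; $d=3$: $(0.4,0.6,0.2)$; $d=4$: $(0.3,0.5,0.1)$; $d=5$: $(0.3,0.4,0.1)$; $d=6$: $(0.27,0.32,0.1)$; $d=7$: $(0.26,0.27,0.01)$, and let $x\in\mathcal{S}_{a,b,c}$. Then for every $n\ge2$ (partial derivatives evaluated at $x$): $\left|\frac{\partial\psi_n}{\partial x_{n-1}}\right|\le\frac{4d(d-1)^{d-1}(1+c+c^2)^d}{(d+1)^{d+1}(1+c)^{d-1}}$ for $d=2$; $\left|\frac{\partial\psi_n}{\partial x_{n-1}}\right|\le\frac{db^{d-1}(1+c+c^2)^d}{(1+b)(1+b+bc)^{d}}$ for $3\le d\le7$; $\left|\frac{\partial\psi_n}{\partial x_{n}}\right|\le\left|\frac{\partial\psi_n}{\partial x_{n-1}}\right|\cdot b(1+c+bc)$; $\left|\frac{\partial\psi_n}{\partial x_{n+1}}\right|\le\frac{db^dc(1+c+c^2)^{d-1}}{(1+b+bc)^d}$.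
   Context: For $n\ge2$, $\psi_n(x)=x_{n-1}^d\big(\frac{1+x_n+x_nx_{n+1}}{1+x_{n-1}+x_{n-1}x_n}\big)^d$. $\mathcal{R}$ is the set of sequences $(x_i)_{i\ge1}$ with $x_i=z_i/z_{i-1}$ ($x_i=0$ if $z_{i-1}=0$) for $z$ a symmetric probability distribution on $\mathbb{Z}$ whose support is an interval or all of $\mathbb{Z}$, and $\mathcal{S}_{a,b,c}:=\{x\in\mathcal{R}: a\le x_1\le b,\ 0\le x_n\le c\ \forall n\ge2\}$. *)

(* Defs.v *)
From Stdlib Require Import Reals Lra ZArith.
From Coquelicot Require Import Coquelicot.
Open Scope R_scope.

Definition sym_prob_interval (z : Z -> R) : Prop :=
  (forall i, 0 <= z i) /\
  (forall i, z (- i)%Z = z i) /\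
  (* total mass 1: sum over i >= 0 of z i plus sum over i <= -1 of z i *)
  is_series (fun n : nat => z (Z.of_nat n) + z (- Z.of_nat (S n))%Z) 1 /\
  (forall i j k : Z, (i <= j <= k)%Z -> 0 < z i -> 0 < z k -> 0 < z j).

(* The set R of sequences (x_i)_{i>=1}; x : nat -> R, the value x 0 is unused. *)
Definition in_calR (x : nat -> R) : Prop :=
  exists z : Z -> R, sym_prob_interval z /\
    forall i : nat, (1 <= i)%nat ->
      x i = if Req_EM_T (z (Z.of_nat i - 1)%Z) 0 then 0
            else z (Z.of_nat i) / z (Z.of_nat i - 1)%Z.

Definition in_S (a b c : R) (x : nat -> R) : Prop :=
  in_calR x /\ a <= x 1%nat <= b /\ (forall n : nat, (2 <= n)%nat -> 0 <= x n <= c).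

Definition psi (d : nat) (u v w : R) : R :=
  u ^ d * ((1 + v + v * w) / (1 + u + u * v)) ^ d.

Definition psi_n (d n : nat) (x : nat -> R) : R :=
  psi d (x (n - 1)%nat) (x n) (x (n + 1)%nat).

Definition dpsi_prev (d n : nat) (x : nat -> R) : R :=
  Derive (fun t => psi d t (x n) (x (n + 1)%nat)) (x (n - 1)%nat).
Definition dpsi_cur (d n : nat) (x : nat -> R) : R :=
  Derive (fun t => psi d (x (n - 1)%nat) t (x (n + 1)%nat)) (x n).
Definition dpsi_next (d n : nat) (x : nat -> R) : R :=
  Derive (fun t => psi d (x (n - 1)%nat) (x n) t) (x (n + 1)%nat).

Definition abc (d : nat) : R * R * R :=
  match d with
  | 2%nat => (5/10, 7/10, 27/100)
  | 3%nat => (4/10, 6/10, 2/10)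
  | 4%nat => (3/10, 5/10, 1/10)
  | 5%nat => (3/10, 4/10, 1/10)
  | 6%nat => (27/100, 32/100, 1/10)
  | _ => (26/100, 27/100, 1/100)
  end.

(* Main.v *)
Require Import Defs.
From Stdlib Require Import Reals Lra Lia.
From Coquelicot Require Import Coquelicot.
Open Scope R_scope.

Lemma mono (j:nat) u b k : 0 <= u <= b -> 0 <= k -> k*b <= 1 ->
  u^(j+2) * (1+k*b)^(j+4) <= b^(j+2) * (1+k*u)^(j+4).
Proof.
  intros Hu Hk Hkb.
  assert (B1 : u*(1+k*b)^2 <= b*(1+k*u)^2).
  { assert (k*u <= k*b) by (apply Rmult_le_compat_l; lra).
    assert (0 <= k*u) by (apply Rmult_le_pos; lra).
    assert ((k*b)*(k*u) <= 1*1) by (apply Rmult_le_compat; lra).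
    assert (k*k*b*u <= 1) by nra.
    assert (0 <= (b-u)*(1-k*k*b*u)) by (apply Rmult_le_pos; lra).
    assert (b*(1+k*u)^2 - u*(1+k*b)^2 = (b-u)*(1-k*k*b*u)) by ring. lra. }
  assert (S1 : u*(1+k*b) <= b*(1+k*u)) by nra.
  induction j as [|j IH].
  - simpl. assert (0 <= u*(1+k*b)^2) by (apply Rmult_le_pos; [lra| apply pow2_ge_0]).
    pose proof (Rmult_le_compat _ _ _ _ H H B1 B1). simpl in H0. nra.
  - replace (S j + 2)%nat with (S (j+2)) by lia.
    replace (S j + 4)%nat with (S (j+4)) by lia. simpl.
    assert (0 <= u^(j+2) * (1+k*b)^(j+4)) by
      (apply Rmult_le_pos; apply pow_le; nra).
    assert (0 <= u*(1+k*b)) by (apply Rmult_le_pos; nra).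
    pose proof (Rmult_le_compat _ _ _ _ H H0 IH S1).
    match goal with |- ?L <= ?R' => 
      replace L with (u ^ (j + 2) * (1 + k * b) ^ (j + 4) * (u * (1 + k * b))) by ring;
      replace R' with (b ^ (j + 2) * (1 + k * u) ^ (j + 4) * (b * (1 + k * u))) by ring end.
    exact H1.
Qed.
Lemma D_pos u v : 0 <= u -> 0 <= v -> 0 < 1+u+u*v.
Proof. intros; nra. Qed.
Ltac fin m :=
  change (match m with | 0%nat => 1 | S _ => INR m + 1 end) with (INR (S m));
  rewrite ?Rpow_mult_distr, ?pow_inv; simpl pow; field;
  repeat match goal with |- _ /\ _ => split end; try apply pow_nonzero; lra.
Lemma d_prev (m:nat) u v w : 0 <= u -> 0 <= v -> 0 <= w -> is_derive (fun t => psi (S m) t v w) u (INR (S m) * u^m * (1+v+v*w)^(S m) / (1+u+u*v)^(S (S m))).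
intros. pose proof (D_pos u v H H0). unfold psi. auto_derive. lra. fin m.
Qed.
Lemma d_cur (m:nat) u v w : 0 <= u -> 0 <= v -> 0 <= w -> is_derive (fun t => psi (S m) u t w) v (INR (S m) * u^(S m) * (1+v+v*w)^m * (1+w+u*w) / (1+u+u*v)^(S (S m))).
intros. pose proof (D_pos u v H H0). unfold psi. auto_derive. lra. fin m.
Qed.
Lemma d_next (m:nat) u v w : 0 <= u -> 0 <= v -> 0 <= w -> is_derive (fun t => psi (S m) u v t) w (INR (S m) * u^(S m) * v * (1+v+v*w)^m / (1+u+u*v)^(S m)).
intros. pose proof (D_pos u v H H0). unfold psi. auto_derive. lra. fin m.
Qed.
Lemma next_bound (m:nat) u v w b c : 0 <= u <= b -> 0 <= v <= c -> 0 <= w <= c ->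
  INR (S m) * u^(S m) * v * (1+v+v*w)^m / (1+u+u*v)^(S m) <=
  INR (S m) * b^(S m) * c * (1+c+c^2)^m / (1+b+b*c)^(S m).
Proof.
  intros Hu Hv Hw.
  set (N := 1+v+v*w). set (D := 1+u+u*v). set (E := 1+b+b*v). set (Ec := 1+b+b*c).
  set (Nc := 1+c+c^2).
  assert (HD : 0 < D) by (unfold D; nra).
  assert (HE : 0 < E) by (unfold E; nra).
  assert (HEc : 0 < Ec) by (unfold Ec; nra).
  assert (HN : 1 <= N) by (unfold N; nra).
  assert (h1 : u/D <= b/E).
  { apply (Rmult_le_reg_r (D*E)). nra. 
    replace (u/D*(D*E)) with (u*E) by (field; lra).
    replace (b/E*(D*E)) with (b*D) by (field; lra). unfold E, D; nra. }
  assert (h2 : v/E <= c/Ec).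
  { apply (Rmult_le_reg_r (Ec*E)). nra.
    replace (v/E*(Ec*E)) with (v*Ec) by (field; lra).
    replace (c/Ec*(Ec*E)) with (c*E) by (field; lra). unfold E, Ec; nra. }
  assert (h3 : N/E <= Nc/Ec).
  { apply (Rmult_le_reg_r (Ec*E)). nra.
    replace (N/E*(Ec*E)) with (N*Ec) by (field; lra).
    replace (Nc/Ec*(Ec*E)) with (Nc*E) by (field; lra).
    assert (N <= 1 + v*(1+c)) by (unfold N; nra).
    assert ((1+v*(1+c))*Ec - Nc*E = (v-c)*((1+c)*(1+b) - b)) by (unfold Ec, Nc, E; ring).
    assert ((v-c)*((1+c)*(1+b) - b) <= 0) by (apply Rmult_le_0_r; nra).
    assert (N*Ec <= (1+v*(1+c))*Ec) by (apply Rmult_le_compat_r; lra). lra. }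
  assert (p1 : (u/D)^(S m) <= (b/E)^(S m)).
  { apply pow_incr. split; [apply Rdiv_le_0_compat|]; lra. }
  assert (p3 : (N/E)^m <= (Nc/Ec)^m).
  { apply pow_incr. split; [apply Rdiv_le_0_compat|]; lra. }
  assert (d0 : 0 <= INR (S m)) by apply pos_INR.
  apply Rle_trans with (INR (S m) * (b/E)^(S m) * v * N^m).
  { replace (INR (S m) * u ^ S m * v * N ^ m / D ^ S m) with (INR (S m) * (u/D)^(S m) * v * N^m).
    2:{ unfold Rdiv. rewrite Rpow_mult_distr, pow_inv. field. apply pow_nonzero; lra. }
    apply Rmult_le_compat_r. apply pow_le; lra.
    apply Rmult_le_compat_r. lra.
    apply Rmult_le_compat_l; lra. }
  replace (INR (S m) * (b/E)^(S m) * v * N^m) with (INR (S m) * b^(S m) * (v/E) * (N/E)^m).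
  2:{ unfold Rdiv. rewrite !Rpow_mult_distr, !pow_inv. simpl pow. field. split; [apply pow_nonzero|]; lra. }
  replace (INR (S m) * b ^ S m * c * Nc ^ m / Ec ^ S m) with (INR (S m) * b^(S m) * (c/Ec) * (Nc/Ec)^m).
  2:{ unfold Rdiv. rewrite !Rpow_mult_distr, !pow_inv. simpl pow. field. split; [apply pow_nonzero|]; lra. }
  assert (0 <= b^(S m)) by (apply pow_le; lra).
  apply Rmult_le_compat.
  - apply Rmult_le_pos. apply Rmult_le_pos; lra. apply Rdiv_le_0_compat; lra.
  - apply pow_le, Rdiv_le_0_compat; lra.
  - apply Rmult_le_compat_l. apply Rmult_le_pos; lra. exact h2.
  - exact p3.
Qed.
Lemma prev_bound (j:nat) u v w b c : 0 <= u <= b -> 0 <= v <= c -> 0 <= w <= c ->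
  b*(1+c) <= 1 ->
  INR (S (j+2)) * u^(j+2) * (1+v+v*w)^(S (j+2)) / (1+u+u*v)^(S (S (j+2))) <=
  INR (S (j+2)) * b^(j+2) * (1+c+c^2)^(S (j+2)) / ((1+b)*(1+b+b*c)^(S (j+2))).
Proof.
  intros Hu Hv Hw Hbc.
  set (m := (j+2)%nat).
  set (N := 1+v+v*w). set (D := 1+u+u*v). set (E := 1+b+b*v). set (Ec := 1+b+b*c).
  set (Nc := 1+c+c^2).
  assert (HD : 0 < D) by (unfold D; nra).
  assert (HE : 0 < E) by (unfold E; nra).
  assert (HEc : 0 < Ec) by (unfold Ec; nra).
  assert (HN : 1 <= N) by (unfold N; nra).
  assert (h3 : N/E <= Nc/Ec).
  { apply (Rmult_le_reg_r (Ec*E)). nra.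
    replace (N/E*(Ec*E)) with (N*Ec) by (field; lra).
    replace (Nc/Ec*(Ec*E)) with (Nc*E) by (field; lra).
    assert (N <= 1 + v*(1+c)) by (unfold N; nra).
    assert ((1+v*(1+c))*Ec - Nc*E = (v-c)*((1+c)*(1+b) - b)) by (unfold Ec, Nc, E; ring).
    assert ((v-c)*((1+c)*(1+b) - b) <= 0) by (apply Rmult_le_0_r; nra).
    assert (N*Ec <= (1+v*(1+c))*Ec) by (apply Rmult_le_compat_r; lra). lra. }
  assert (h1 : u^m / D^(S (S m)) <= b^m / E^(S (S m))).
  { pose proof (mono j u b (1+v) Hu ltac:(lra) ltac:(nra)) as M.
    replace (1 + (1+v)*b) with E in M by (unfold E; ring).
    replace (1 + (1+v)*u) with D in M by (unfold D; ring).
    replace (j+4)%nat with (S (S m)) in M by (unfold m; lia).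
    fold m in M.
    assert (0 < D^(S (S m))) by (apply pow_lt; lra).
    assert (0 < E^(S (S m))) by (apply pow_lt; lra).
    apply (Rmult_le_reg_r (D^(S (S m)) * E^(S (S m)))). nra.
    replace (u ^ m / D ^ S (S m) * (D ^ S (S m) * E ^ S (S m))) with (u^m * E^(S (S m))) by (field; lra).
    replace (b ^ m / E ^ S (S m) * (D ^ S (S m) * E ^ S (S m))) with (b^m * D^(S (S m))) by (field; lra).
    exact M. }
  assert (p3 : (N/E)^(S m) <= (Nc/Ec)^(S m)).
  { apply pow_incr. split; [apply Rdiv_le_0_compat|]; lra. }
  assert (d0 : 0 <= INR (S m)) by apply pos_INR.
  apply Rle_trans with (INR (S m) * (b^m / E^(S (S m))) * N^(S m)).
  { replace (INR (S m) * u ^ m * N ^ S m / D ^ S (S m)) with (INR (S m) * (u^m / D^(S (S m))) * N^(S m))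
      by (field; apply pow_nonzero; lra).
    apply Rmult_le_compat_r. apply pow_le; lra.
    apply Rmult_le_compat_l; lra. }
  replace (INR (S m) * (b^m / E^(S (S m))) * N^(S m)) with (INR (S m) * b^m * (N/E)^(S m) * /E).
  2:{ unfold Rdiv. rewrite !Rpow_mult_distr, !pow_inv. simpl pow. field. split; [apply pow_nonzero|]; lra. }
  replace (INR (S m) * b ^ m * Nc ^ S m / ((1 + b) * Ec ^ S m)) with (INR (S m) * b^m * (Nc/Ec)^(S m) * /(1+b)).
  2:{ unfold Rdiv. rewrite !Rpow_mult_distr, !pow_inv. simpl pow. field. repeat split; try apply pow_nonzero; lra. }
  assert (0 <= b^m) by (apply pow_le; lra).
  apply Rmult_le_compat.
  - apply Rmult_le_pos. apply Rmult_le_pos; lra. apply pow_le, Rdiv_le_0_compat; lra.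
  - left; apply Rinv_0_lt_compat; lra.
  - apply Rmult_le_compat_l. apply Rmult_le_pos; lra. exact p3.
  - apply Rinv_le_contravar; unfold E; nra.
Qed.
Lemma cur_bound (m:nat) u v w b c : 0 <= u <= b -> 0 <= v <= c -> 0 <= w <= c ->
  Rabs (INR (S m) * u^(S m) * (1+v+v*w)^m * (1+w+u*w) / (1+u+u*v)^(S (S m))) <=
  Rabs (INR (S m) * u^m * (1+v+v*w)^(S m) / (1+u+u*v)^(S (S m))) * (b*(1+c+b*c)).
Proof.
  intros Hu Hv Hw.
  set (N := 1+v+v*w). set (D := 1+u+u*v).
  assert (HD : 0 < D) by (unfold D; nra).
  assert (HN : 1 <= N) by (unfold N; nra).
  assert (d0 : 0 <= INR (S m)) by apply pos_INR.
  assert (P : 0 <= INR (S m) * u^m * N^(S m) / D^(S (S m))).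
  { apply Rdiv_le_0_compat. apply Rmult_le_pos. apply Rmult_le_pos; [lra| apply pow_le; lra].
    apply pow_le; lra. apply pow_lt; lra. }
  rewrite (Rabs_pos_eq _ P).
  replace (INR (S m) * u ^ S m * N ^ m * (1 + w + u * w) / D ^ S (S m))
    with ((INR (S m) * u^m * N^(S m) / D^(S (S m))) * (u*(1+w+u*w)/N)).
  2:{ simpl pow. field. split; [apply pow_nonzero|]; lra. }
  assert (r0 : 0 <= u*(1+w+u*w)/N) by (apply Rdiv_le_0_compat; nra).
  rewrite (Rabs_pos_eq _ (Rmult_le_pos _ _ P r0)).
  apply Rmult_le_compat_l; [lra|].
  apply (Rmult_le_reg_r N). lra.
  replace (u * (1 + w + u * w) / N * N) with (u * (1 + w + u * w)) by (field; lra).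
  assert (u*(1+w+u*w) <= b*(1+c+b*c)).
  { assert (0 <= u*w) by nra. assert (u*w <= b*c) by nra. nra. }
  assert (0 <= b*(1+c+b*c)) by nra. nra.
Qed.

Lemma two_bound u v w c : 0 <= u -> 0 <= v <= c -> 0 <= w <= c -> c <= 1/2 ->
  INR 2 * u^1 * (1+v+v*w)^2 / (1+u+u*v)^3 <=
  4 * INR 2 * (INR 2 - 1) ^ (2 - 1) * (1 + c + c ^ 2) ^ 2
         / ((INR 2 + 1) ^ (2 + 1) * (1 + c) ^ (2 - 1)).
Proof.
  intros Hu Hv Hw Hc.
  replace (INR 2) with 2 by (simpl; ring). simpl Nat.sub. simpl Nat.add.
  set (N := 1+v+v*w). set (D := 1+u+u*v). set (Nc := 1+c+c^2).
  assert (HD : 0 < D) by (unfold D; nra).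
  assert (HN : 1 <= N) by (unfold N; nra).
  assert (A : 27*u*(1+v) <= 4*D^3).
  { assert (4*D^3 - 27*u*(1+v) = (2*(u*(1+v))-1)^2*(u*(1+v)+4)) by (unfold D; ring).
    assert (0 <= (2*(u*(1+v))-1)^2*(u*(1+v)+4)) by (apply Rmult_le_pos; [apply pow2_ge_0|nra]). lra. }
  assert (B : N^2*(1+c) <= Nc^2*(1+v)).
  { assert (N <= 1 + v*(1+c)) by (unfold N; nra).
    assert (N^2 <= (1 + v*(1+c))^2) by (apply pow_incr; lra).
    assert ((1+v*(1+c))^2*(1+c) - Nc^2*(1+v) = (v-c)*((1+c)^2*(2+(1+c)*v+(1+c)*c) - (1+(1+c)*c)^2))
      by (unfold Nc; ring).
    assert ((v-c)*((1+c)^2*(2+(1+c)*v+(1+c)*c) - (1+(1+c)*c)^2) <= 0) by (apply Rmult_le_0_r; nra).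
    nra. }
  assert (0 < D^3) by (apply pow_lt; lra).
  assert (0 < (1+c)) by lra.
  apply (Rmult_le_reg_r (D^3 * ((2+1)^3*(1+c)^1))). nra.
  replace (2 * u ^ 1 * N ^ 2 / D ^ 3 * (D ^ 3 * ((2 + 1) ^ 3 * (1 + c) ^ 1))) with
    (2 * 27 * u * N^2 * (1+c)) by (field; lra).
  replace (4 * 2 * (2 - 1) ^ 1 * Nc ^ 2 / ((2 + 1) ^ 3 * (1 + c) ^ 1) * (D ^ 3 * ((2 + 1) ^ 3 * (1 + c) ^ 1)))
    with (8 * Nc^2 * D^3) by (field; lra).
  assert (0 <= N^2) by apply pow2_ge_0.
  assert (0 <= u*(1+v)) by nra.
  assert (0 <= 27*u*(1+v)) by lra. assert (0 <= N^2*(1+c)) by (apply Rmult_le_pos; lra).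
  pose proof (Rmult_le_compat _ _ _ _ H3 H4 A B).
  apply (Rmult_le_reg_r (1+v)). lra.
  match goal with Hx : 27 * u * (1 + v) * (N ^ 2 * (1 + c)) <= _ |- _ =>
    replace (2 * 27 * u * N ^ 2 * (1 + c) * (1 + v)) with (2 * (27 * u * (1 + v) * (N ^ 2 * (1 + c)))) by ring;
    replace (8 * Nc ^ 2 * D ^ 3 * (1 + v)) with (2 * (4 * D ^ 3 * (Nc ^ 2 * (1 + v)))) by ring; lra end.
Qed.

Lemma gen (m:nat) (b c : R) (x : nat -> R) (n : nat) :
  0 < c <= b -> b*(1+c) <= 1 -> c <= 1/2 ->
  0 <= x (n-1)%nat <= b -> 0 <= x n <= c -> 0 <= x (n+1)%nat <= c ->
    ((S m = 2%nat) ->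
       Rabs (dpsi_prev (S m) n x) <=
         4 * INR (S m) * (INR (S m) - 1) ^ (S m - 1) * (1 + c + c ^ 2) ^ (S m)
         / ((INR (S m) + 1) ^ (S m + 1) * (1 + c) ^ (S m - 1))) /\
    ((3 <= S m)%nat ->
       Rabs (dpsi_prev (S m) n x) <=
         INR (S m) * b ^ (S m - 1) * (1 + c + c ^ 2) ^ (S m)
         / ((1 + b) * (1 + b + b * c) ^ (S m))) /\
    Rabs (dpsi_cur (S m) n x) <= Rabs (dpsi_prev (S m) n x) * (b * (1 + c + b * c)) /\
    Rabs (dpsi_next (S m) n x) <=
      INR (S m) * b ^ (S m) * c * (1 + c + c ^ 2) ^ (S m - 1) / (1 + b + b * c) ^ (S m).
Proof.
  intros Hbc Hb1 Hc Hu Hv Hw.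
  unfold dpsi_prev, dpsi_cur, dpsi_next.
  set (u := x (n-1)%nat) in *. set (v := x n) in *. set (w := x (n+1)%nat) in *.
  assert (E1 : Derive (fun t => psi (S m) t v w) u = INR (S m) * u^m * (1+v+v*w)^(S m) / (1+u+u*v)^(S (S m)))
    by (apply is_derive_unique; apply d_prev; lra).
  assert (E2 : Derive (fun t => psi (S m) u t w) v = INR (S m) * u^(S m) * (1+v+v*w)^m * (1+w+u*w) / (1+u+u*v)^(S (S m)))
    by (apply is_derive_unique; apply d_cur; lra).
  assert (E3 : Derive (fun t => psi (S m) u v t) w = INR (S m) * u^(S m) * v * (1+v+v*w)^m / (1+u+u*v)^(S m))
    by (apply is_derive_unique; apply d_next; lra).
  rewrite E1, E2, E3.
  assert (HD : 0 < 1+u+u*v) by nra.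
  assert (HN : 1 <= 1+v+v*w) by nra.
  assert (P : 0 <= INR (S m) * u^m * (1+v+v*w)^(S m) / (1+u+u*v)^(S (S m))).
  { apply Rdiv_le_0_compat. apply Rmult_le_pos. apply Rmult_le_pos; [apply pos_INR| apply pow_le; lra].
    apply pow_le; lra. apply pow_lt; lra. }
  split; [|split; [|split]].
  - intros Hm. injection Hm as ->. rewrite (Rabs_pos_eq _ P).
    apply two_bound; lra.
  - intros Hm. rewrite (Rabs_pos_eq _ P).
    destruct m as [|[|j]]; try lia.
    replace (S (S (S j)) - 1)%nat with (j+2)%nat by lia.
    replace (S (S j)) with (j+2)%nat by lia.
    apply prev_bound; lra.
  - apply cur_bound; lra.
  - assert (Q : 0 <= INR (S m) * u^(S m) * v * (1+v+v*w)^m / (1+u+u*v)^(S m)).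
    { apply Rdiv_le_0_compat. apply Rmult_le_pos. apply Rmult_le_pos. apply Rmult_le_pos.
      apply pos_INR. apply pow_le; lra. lra. apply pow_le; lra. apply pow_lt; lra. }
    rewrite (Rabs_pos_eq _ Q).
    replace (S m - 1)%nat with m by lia.
    apply next_bound; lra.
Qed.

Theorem lemma2p12 (d : nat) (x : nat -> R) :
  (2 <= d <= 7)%nat ->
  let '(a, b, c) := abc d in
  in_S a b c x ->
  forall n : nat, (2 <= n)%nat ->
    ((d = 2%nat) ->
       Rabs (dpsi_prev d n x) <=
         4 * INR d * (INR d - 1) ^ (d - 1) * (1 + c + c ^ 2) ^ d
         / ((INR d + 1) ^ (d + 1) * (1 + c) ^ (d - 1))) /\
    ((3 <= d)%nat ->
       Rabs (dpsi_prev d n x) <=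
         INR d * b ^ (d - 1) * (1 + c + c ^ 2) ^ d
         / ((1 + b) * (1 + b + b * c) ^ d)) /\
    Rabs (dpsi_cur d n x) <= Rabs (dpsi_prev d n x) * (b * (1 + c + b * c)) /\
    Rabs (dpsi_next d n x) <=
      INR d * b ^ d * c * (1 + c + c ^ 2) ^ (d - 1) / (1 + b + b * c) ^ d.
Proof.
  intros Hd.
  assert (E : exists m, d = S m /\ (1 <= m <= 6)%nat) by (exists (d-1)%nat; lia).
  destruct E as [m [-> Hm]].
  assert (G : forall a b c, abc (S m) = (a,b,c) -> 0 <= a -> a <= b -> 0 < c <= b -> b*(1+c) <= 1 -> c <= 1/2 ->
    in_S a b c x ->
    forall n : nat, (2 <= n)%nat ->
    ((S m = 2%nat) ->
       Rabs (dpsi_prev (S m) n x) <=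
         4 * INR (S m) * (INR (S m) - 1) ^ (S m - 1) * (1 + c + c ^ 2) ^ (S m)
         / ((INR (S m) + 1) ^ (S m + 1) * (1 + c) ^ (S m - 1))) /\
    ((3 <= S m)%nat ->
       Rabs (dpsi_prev (S m) n x) <=
         INR (S m) * b ^ (S m - 1) * (1 + c + c ^ 2) ^ (S m)
         / ((1 + b) * (1 + b + b * c) ^ (S m))) /\
    Rabs (dpsi_cur (S m) n x) <= Rabs (dpsi_prev (S m) n x) * (b * (1 + c + b * c)) /\
    Rabs (dpsi_next (S m) n x) <=
      INR (S m) * b ^ (S m) * c * (1 + c + c ^ 2) ^ (S m - 1) / (1 + b + b * c) ^ (S m)).
  { intros a b c _ Ha Hab Hcb Hb1 Hc [_ [Hx1 Hxn]] n Hn.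
    apply gen; try lra.
    - destruct (Nat.eq_dec n 2) as [->|].
      + simpl. lra.
      + specialize (Hxn (n-1)%nat ltac:(lia)). lra.
    - apply Hxn; lia.
    - apply Hxn; lia. }
  destruct m as [|[|[|[|[|[|[|m]]]]]]]; try lia;
  cbn [abc]; apply (G _ _ _ eq_refl); lra.
Qed.
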